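(* Let $\mathcal{B}$ be a real Banach space having a pre-dual space $\mathcal{B}_*$, let $\nu_j\in\mathcal{B}_*$, $j\in\mathbb{N}_m$, be linearly independent, and let $\mathbf{y}\in\mathbb{R}^m\setminus\{0\}$. For $\mathbf{c}\in\mathbb{R}^m$ put $\mathcal{L}^*(\mathbf{c}):=\sum_{j\in\mathbb{N}_m}c_j\nu_j$, and let (D) denote the problem $\inf\{\|\mathcal{L}^*(\mathbf{c})\|_{\mathcal{B}_*}:\langle\mathbf{c},\mathbf{y}\rangle_{\mathbb{R}^m}=1,\ \mathbf{c}\in\mathbb{R}^m\}$. Then: (a) if $\hat f$ is a solution of the minimum norm interpolation problem with data $\mathbf{y}$, there exists a solution $\hat{\mathbf{c}}$ of (D) such that $$\hat f\in\frac{1}{\|\mathcal{L}^*(\hat{\mathbf{c}})\|_{\mathcal{B}_*}}\partial\|\cdot\|_{\mathcal{B}_*}(\mathcal{L}^*(\hat{\mathbf{c}}))\cap\mathcal{M}_{\mathbf{y}};$$ (b) conversely, if $\hat{\mathbf{c}}$ is a solution of (D) and $\hat f\in\mathcal{B}$ belongs to the set displayed in (a), then $\hat f$ is a solution of the minimum norm interpolation problem with data $\mathbf{y}$.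
   Context: $\mathcal{B}$ is a real Banach space with dual $\mathcal{B}^*$ and pairing $\langle\nu,f\rangle_{\mathcal{B}}:=\nu(f)$; $\mathbb{N}_m:=\{1,\dots,m\}$; $\mathcal{L}(f):=[\langle\nu_j,f\rangle_{\mathcal{B}}:j\in\mathbb{N}_m]$, $\mathcal{M}_{\mathbf{y}}:=\{f\in\mathcal{B}:\mathcal{L}(f)=\mathbf{y}\}$; a solution of the minimum norm interpolation problem with data $\mathbf{y}$ is an $\hat f\in\mathcal{M}_{\mathbf{y}}$ with $\|\hat f\|_{\mathcal{B}}=\inf\{\|f\|_{\mathcal{B}}:f\in\mathcal{M}_{\mathbf{y}}\}$. A normed space $\mathcal{B}_*$ is a pre-dual of $\mathcal{B}$ if $(\mathcal{B}_* )^*=\mathcal{B}$, with $\langle\nu,f\rangle_{\mathcal{B}}=f(\nu)$ for $\nu\in\mathcal{B}_*$. For a convex $\phi$ on a real normed space $X$, $\partial\phi(x):=\{\mu\in X^*:\phi(z)-\phi(x)\ge\mu(z-x)\ \forall z\in X\}$. *)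

(* Defs.v *)
From HB Require Import structures.
From mathcomp Require Import all_boot all_order all_algebra.
From mathcomp Require Import all_classical all_reals all_analysis.
Set Implicit Arguments. Unset Strict Implicit. Unset Printing Implicit Defensive.
Import Order.TTheory GRing.Theory Num.Theory.
Import numFieldNormedType.Exports.
Local Open Scope classical_set_scope.
Local Open Scope ring_scope.

(* The pre-dual B_* is a real normed space [V]; the Banach space B is its
   (topological) dual: B = (B_* )^*, with pairing <nu, f>_B := f nu. *)

Definition in_dual (R : realType) (V : normedModType R) (f : V -> R) : Prop :=
  (forall (a : R) (x z : V), f (a *: x + z) = a * f x + f z) /\ continuous f.

Definition dual_norm (R : realType) (V : normedModType R) (f : V -> R) : R :=
  sup [set `|f x| | x in [set x : V | `|x| <= 1]].

Definition lin_indep (R : realType) (V : normedModType R) (m : nat)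
  (nu : 'I_m -> V) : Prop :=
  forall c : 'I_m -> R, \sum_(j < m) c j *: nu j = 0 -> forall j, c j = 0.

Definition interp_set (R : realType) (V : normedModType R) (m : nat)
  (nu : 'I_m -> V) (y : 'I_m -> R) : set (V -> R) :=
  [set f | in_dual f /\ forall j, f (nu j) = y j].

Definition mni_solution (R : realType) (V : normedModType R) (m : nat)
  (nu : 'I_m -> V) (y : 'I_m -> R) (f : V -> R) : Prop :=
  interp_set nu y f /\
  dual_norm f = inf [set dual_norm g | g in interp_set nu y].

Definition Lstar (R : realType) (V : normedModType R) (m : nat)
  (nu : 'I_m -> V) (c : 'I_m -> R) : V := \sum_(j < m) c j *: nu j.

Definition dot (R : realType) (m : nat) (c y : 'I_m -> R) : R :=
  \sum_(j < m) c j * y j.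

Definition D_solution (R : realType) (V : normedModType R) (m : nat)
  (nu : 'I_m -> V) (y : 'I_m -> R) (c : 'I_m -> R) : Prop :=
  dot c y = 1 /\
  `|Lstar nu c| = inf [set `|Lstar nu c'| | c' in [set c' | dot c' y = 1]].

Definition subdiff_norm (R : realType) (V : normedModType R) (x : V)
  : set (V -> R) :=
  [set mu | in_dual mu /\ forall z : V, `|z| - `|x| >= mu (z - x)].

Definition dual_char_set (R : realType) (V : normedModType R) (m : nat)
  (nu : 'I_m -> V) (y : 'I_m -> R) (c : 'I_m -> R) : set (V -> R) :=
  [set f | (exists2 g, subdiff_norm (Lstar nu c) g &
              f = (fun v => (`|Lstar nu c|)^-1 * g v))
           /\ interp_set nu y f].

(* Main.v *)
Require Import Defs.
From mathcomp Require Import all_boot all_order all_algebra.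
From mathcomp Require Import all_classical all_reals all_analysis.
From mathcomp Require Import lra.
Import Order.TTheory GRing.Theory Num.Theory.
Import numFieldNormedType.Exports.
Local Open Scope classical_set_scope.
Local Open Scope ring_scope.
Set Implicit Arguments. Unset Strict Implicit. Unset Printing Implicit Defensive.

Section Basic.
Variables (R : realType) (V : normedModType R).

Definition lin (f : V -> R) := forall (a : R) (x z : V), f (a *: x + z) = a * f x + f z.

Lemma lin0 f : lin f -> f 0 = 0.
Proof.
move=> lf; have := lf 1 0 0; rewrite scale1r addr0 mul1r => h.
by apply: (addrI (f 0)); rewrite addr0 -h.
Qed.

Lemma linD f x z : lin f -> f (x + z) = f x + f z.
Proof. by move=> lf; rewrite -[x in LHS]scale1r lf mul1r. Qed.

Lemma linZ f a x : lin f -> f (a *: x) = a * f x.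
Proof. by move=> lf; rewrite -[_ *: _]addr0 lf (lin0 lf) addr0. Qed.

Lemma linN f x : lin f -> f (- x) = - f x.
Proof. by move=> lf; rewrite -scaleN1r linZ // mulN1r. Qed.

Lemma linB f x z : lin f -> f (x - z) = f x - f z.
Proof. by move=> lf; rewrite linD // linN. Qed.

Lemma lin_sum f (I : finType) (c : I -> R) (v : I -> V) : lin f ->
  f (\sum_i c i *: v i) = \sum_i c i * f (v i).
Proof.
move=> lf; apply: (big_ind2 (fun a b => f a = b)).
- exact: lin0.
- by move=> a b a' b' <- <-; rewrite linD.
- by move=> i _; rewrite linZ.
Qed.

Lemma bound_cont f K : lin f -> (forall x, `|f x| <= K * `|x|) -> continuous f.
Proof.
move=> lf fK x.
have K1 : 0 < `|K| + 1 by rewrite ltr_wpDl.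
have fK' z : `|f z| <= (`|K| + 1) * `|z|.
  by rewrite (le_trans (fK z))// ler_wpM2r// (le_trans (ler_norm _))// lerDl.
apply/(@cvgrPdist_lt _ _ _ (nbhs x)) => e e_gt0; near=> z.
rewrite -linB// (le_lt_trans (fK' _))// -ltr_pdivlMl//.
near: z; apply: cvgr_dist_lt => //; rewrite mulrC divr_gt0//.
Unshelve. all: by end_near. Qed.

Lemma cont_bound f : lin f -> continuous f ->
  exists2 K, 0 < K & forall x, `|f x| <= K * `|x|.
Proof.
move=> lf cf.
have := cf 0 => /(@cvgr_dist_lt _ _ _ (nbhs (0:V))) /(_ 1 ltr01).
rewrite (lin0 lf).
move=> /nbhs_norm0P[e /= e0 he].
exists (2 / e); first by rewrite divr_gt0.
move=> x; have [->|x0] := eqVneq x 0; first by by rewrite (lin0 lf) !normr0 mulr0.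
have nx : 0 < `|x| by rewrite normr_gt0.
pose t := e / 2 / `|x|.
have t0 : 0 < t by rewrite /t !divr_gt0.
have : `|0 - f (t *: x)| < 1.
  apply: he => /=; rewrite normrZ gtr0_norm// /t divfK ?gt_eqF//.
  by rewrite ltr_pdivrMr// ltr_pMr// ltr1n.
rewrite sub0r normrN linZ// normrM gtr0_norm// => h.
have : `|f x| < t^-1 by rewrite -(ltr_pM2l t0) mulfV ?gt_eqF.
move=> /ltW /le_trans; apply.
by rewrite /t !invfM !invrK [e^-1 * 2]mulrC.
Unshelve. all: by end_near. Qed.

End Basic.

Section DN.
Variables (R : realType) (V : normedModType R).

Lemma dn_has_sup (f : V -> R) : in_dual f ->
  has_sup [set `|f x| | x in [set x : V | `|x| <= 1]].
Proof.
move=> [lf cf]; have [K K0 hK] := cont_bound lf cf.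
split; first by exists `|f 0|; exists 0 => //=; rewrite normr0.
exists K => _ [x /= x1 <-]; rewrite (le_trans (hK x))//.
by rewrite -[leRHS]mulr1 ler_wpM2l// ltW.
Qed.

Lemma dn_bound (f : V -> R) x : in_dual f -> `|f x| <= dual_norm f * `|x|.
Proof.
move=> fd; have [lf _] := fd.
have [->|x0] := eqVneq x 0; first by rewrite (lin0 lf) !normr0 mulr0.
have nx : 0 < `|x| by rewrite normr_gt0.
have : `|f (`|x|^-1 *: x)| <= dual_norm f.
  apply: sup_upper_bound; first exact: dn_has_sup.
  exists (`|x|^-1 *: x) => //=.
  by rewrite normrZ normfV normr_id mulVf ?gt_eqF.
rewrite linZ// normrM normfV normr_id ler_pdivrMl// mulrC; exact.
Qed.

Lemma dn_ge0 (f : V -> R) : in_dual f -> 0 <= dual_norm f.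
Proof.
move=> fd; have [lf _] := fd.
apply: (le_trans _ (sup_upper_bound (dn_has_sup fd) _)).
  exact: (normr_ge0 (f 0)).
by exists 0 => //=; rewrite normr0.
Qed.

Lemma dn_le (f : V -> R) K : 0 <= K -> (forall x, `|f x| <= K * `|x|) ->
  dual_norm f <= K.
Proof.
move=> K0 hK; apply: ge_sup; first by exists `|f 0|; exists 0 => //=; rewrite normr0.
move=> _ [x /= x1 <-]; rewrite (le_trans (hK x))//.
by rewrite -[leRHS]mulr1 ler_wpM2l.
Qed.

End DN.

Section HB.
Variables (R : realType) (V : normedModType R) (p : V -> R).
Hypothesis pD : forall x z, p (x + z) <= p x + p z.
Hypothesis pZ : forall a x, 0 < a -> p (a *: x) = a * p x.

Definition good (G : set (V * R)) :=
  [/\ G (0, 0),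
      (forall a x s z t, G (x, s) -> G (z, t) -> G (a *: x + z, a * s + t)),
      (forall x s t, G (x, s) -> G (x, t) -> s = t) &
      (forall x s, G (x, s) -> s <= p x)].

Variable G0 : set (V * R).
Hypothesis gG0 : good G0.

Let P (G : set (V * R)) := G = set0 \/ (G0 `<=` G /\ good G).

Let chainP (F : set (set (V * R))) : F `<=` P -> total_on F subset ->
  P (\bigcup_(X in F) X).
Proof.
move=> FP Ftot.
have [U0|U0] := pselect (\bigcup_(X in F) X = set0); first by left.
right.
have two q1 q2 : (\bigcup_(X in F) X) q1 -> (\bigcup_(X in F) X) q2 ->
    exists2 G, F G & [/\ G0 `<=` G, good G, G q1 & G q2].
  move=> [G1 FG1 G1q] [G2 FG2 G2q].
  have [G12|G21] := Ftot _ _ FG1 FG2.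
  - exists G2 => //; have [E|[]] := FP _ FG2; first by rewrite E in G2q.
    by move=> ? ?; split => //; apply: G12.
  - exists G1 => //; have [E|[]] := FP _ FG1; first by rewrite E in G1q.
    by move=> ? ?; split => //; apply: G21.
have [q Uq] : exists q, (\bigcup_(X in F) X) q.
  by apply: contra_notP U0 => h; apply/seteqP; split => // q Uq; apply: h; exists q.
have [G FG [G0G gG _ _]] := two q q Uq Uq.
split.
  by move=> r G0r; exists G => //; apply: G0G.
split.
- by exists G => //; case: gG.
- move=> a x s z t U1 U2; have [G' FG' [_ [_ cl _ _] h1 h2]] := two _ _ U1 U2.
  by exists G' => //; apply: cl.
- move=> x s t U1 U2; have [G' FG' [_ [_ _ fn _] h1 h2]] := two _ _ U1 U2.
  exact: fn h1 h2.
- move=> x s U1; have [G' FG' [_ [_ _ _ dm] h1 _]] := two _ _ U1 U1.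
  exact: dm h1.
Qed.

Lemma good_neg (A : set (V * R)) x s : good A -> A (x, s) -> A (- x, - s).
Proof.
case=> A0 cl _ _ h; have := cl (-1) _ _ _ _ h A0.
by rewrite scaleN1r mulN1r !addr0.
Qed.

Lemma extend_step (A : set (V * R)) x0 : good A -> (forall t, ~ A (x0, t)) ->
  exists t0, good [set q | exists a x t, A (x, t) /\ q = (x + a *: x0, t + a * t0)].
Proof.
move=> gA nA; have [A0 cl fn dm] := gA.
pose S := [set w | exists u s, A (u, s) /\ w = s - p (u - x0)].
have ubS w r : A (w, r) -> ubound S (p (w + x0) - r).
  move=> Awr _ [u [s [Aus ->]]].
  have h1 := dm _ _ (cl 1 _ _ _ _ Aus Awr); rewrite scale1r mul1r in h1.
  have h2 := pD (u - x0) (w + x0).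
  rewrite addrACA addNr addr0 in h2.
  lra.
have hS : has_sup S.
  split; first by exists (0 - p (0 - x0)); exists 0, 0.
  by exists (p (0 + x0) - 0); apply: ubS.
pose t0 := sup S.
have i u s : A (u, s) -> s - p (u - x0) <= t0.
  by move=> Aus; apply: sup_upper_bound => //; exists u, s.
have ii w r : A (w, r) -> t0 <= p (w + x0) - r.
  by move=> Awr; apply: ge_sup; [case: hS|exact: ubS].
exists t0; split.
- by exists 0, 0, 0; split => //; rewrite scale0r mul0r !addr0.
- move=> c _ _ _ _ [a [x [t [Axt [-> ->]]]]] [b [z [r [Azr [-> ->]]]]].
  exists (c * a + b), (c *: x + z), (c * t + r); split; first exact: cl.
  congr pair.
    by rewrite scalerDr scalerA scalerDl addrACA.
  by rewrite mulrDr mulrA mulrDl addrACA.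
- move=> _ s' t' [a [x [t [Axt [-> ->]]]]] [b [z [r [Azr]]]] [E ->].
  have [ab|ab] := eqVneq a b.
    move: E; rewrite ab => /addIr xz; rewrite xz in Axt.
    by rewrite (fn _ _ _ Axt Azr).
  exfalso; apply: (nA ((a - b)^-1 * (r - t))).
  have Azx := cl 1 _ _ _ _ Azr (good_neg gA Axt); rewrite scale1r mul1r in Azx.
  have := cl (a - b)^-1 _ _ _ _ Azx A0; rewrite !addr0.
  suff -> : (a - b)^-1 *: (z - x) = x0 by [].
  have -> : z - x = (a - b) *: x0.
    apply/eqP; rewrite subr_eq scalerBl; apply/eqP/(addIr (b *: x0)).
    by rewrite -E addrAC subrK addrC.
  by rewrite scalerA mulVf ?scale1r // subr_eq0.
- move=> _ _ [a [x [t [Axt [-> ->]]]]].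
  have [a0|a0|->] := ltgtP a 0; last by rewrite scale0r mul0r !addr0; exact: dm.
  + pose b := - a; have b0 : 0 < b by rewrite oppr_gt0.
    have Ab : A (b^-1 *: x, b^-1 * t) by have := cl b^-1 _ _ _ _ Axt A0; rewrite !addr0.
    have h := ler_wpM2l (ltW b0) (i _ _ Ab).
    rewrite mulrBr mulrA mulfV ?gt_eqF// mul1r in h.
    have e : x + a *: x0 = b *: (b^-1 *: x - x0).
      by rewrite scalerBr scalerA mulfV ?gt_eqF// scale1r /b scaleNr opprK.
    rewrite e pZ//; rewrite /b in h *; lra.
  + have Ab : A (a^-1 *: x, a^-1 * t) by have := cl a^-1 _ _ _ _ Axt A0; rewrite !addr0.
    have h := ler_wpM2l (ltW a0) (ii _ _ Ab).
    rewrite mulrBr mulrA mulfV ?gt_eqF// mul1r in h.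
    have e : x + a *: x0 = a *: (a^-1 *: x + x0).
      by rewrite scalerDr scalerA mulfV ?gt_eqF// scale1r.
    rewrite e pZ//; lra.
Qed.

Theorem hahn_banach : exists g : V -> R,
  [/\ lin g, (forall x, g x <= p x) & (forall x s, G0 (x, s) -> g x = s)].
Proof.
have [A [PA Amax]] := Zorn_bigcup chainP.
have G0n0 : G0 (0, 0) by case: gG0.
have [A0|[G0A gA]] := PA.
  exfalso; apply: (Amax G0); last by rewrite /P; right; split.
  rewrite A0; split => //; move/(_ (0, 0) G0n0); done.
have [An0 cl fn dm] := gA.
have allx x0 : exists t, A (x0, t).
  have [//|nx] := pselect (exists t, A (x0, t)); exfalso.
  have nA : forall t, ~ A (x0, t) by move=> t h; apply: nx; exists t.
  have [t0 gA'] := extend_step gA nA.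
  apply: (Amax _ _ (or_intror _ : P _)); last first.
    split; last exact: gA'.
    by move=> q /G0A Aq; exists 0, q.1, q.2; split; [case: q Aq|rewrite scale0r mul0r !addr0; case: q Aq].
  split.
    by move=> [x t] Axt; exists 0, x, t; rewrite scale0r mul0r !addr0.
  move=> h; apply: (nA t0); apply: h.
  by exists 1, 0, 0; rewrite scale1r mul1r !add0r.
pose g x := projT1 (cid (allx x)).
have gP x : A (x, g x) by rewrite /g; case: cid.
exists g; split.
- by move=> a x z; apply: (fn _ _ _ (gP _)); apply: cl; apply: gP.
- by move=> x; apply: dm; apply: gP.
- by move=> x s /G0A Axs; apply: (fn _ _ _ (gP _) Axs).
Qed.

End HB.

Section FD.
Variables (R : realType) (m : nat).

Lemma coord_le (w : 'rV[R]_m) j : `|w ord0 j| <= `|w|.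
Proof.
rewrite [leRHS]/Num.norm /= mx_normrE; apply/bigmax_geP; right => /=.
by exists (ord0, j).
Qed.

Lemma cont_lincomb (W : normedModType R) (a : 'I_m -> W) :
  continuous (fun v : 'rV[R]_m => \sum_j v ord0 j *: a j).
Proof.
pose C := \sum_j `|a j| + 1.
have C0 : 0 < C by rewrite /C ltr_wpDl ?sumr_ge0.
have key (u v : 'rV[R]_m) : `|\sum_j u ord0 j *: a j - \sum_j v ord0 j *: a j| <= C * `|u - v|.
  rewrite -sumrB; apply: (le_trans (ler_norm_sum _ _ _)).
  rewrite /C mulrDl mul1r mulr_suml -[X in X <= _]addr0; apply: lerD => //.
  apply: ler_sum => j _; rewrite -scalerBl normrZ mulrC ler_wpM2l//.
  by have := coord_le (u - v) j; rewrite !mxE.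
move=> x; apply/(@cvgrPdist_lt _ _ _ (nbhs x)) => e e_gt0; near=> z.
rewrite (le_lt_trans (key _ _))// -ltr_pdivlMl//.
near: z; apply: cvgr_dist_lt => //; rewrite mulrC divr_gt0//.
Unshelve. all: by end_near. Qed.

Lemma closed_level (F : 'rV[R]_m -> R) c : continuous F ->
  closed [set v | F v = c].
Proof.
move=> cF; apply: (@preimage_closed _ _ F [set x | x = c]); last exact: closed_eq.
by move=> x _; exact: cF.
Qed.

Lemma closed_sublevel (F : 'rV[R]_m -> R) c : continuous F ->
  closed [set v | F v <= c].
Proof.
move=> cF; apply: (@preimage_closed _ _ F [set x | x <= c]); last exact: closed_le.
by move=> x _; exact: cF.
Qed.

Lemma bounded_ball (A : set 'rV[R]_m) K : (forall v, A v -> `|v| <= K) ->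
  bounded_set A.
Proof.
move=> hA; exists K; split; first exact: num_real.
by move=> M KM v Av /=; rewrite (le_trans (hA _ Av))// ltW.
Qed.

End FD.

Section Dmin.
Variables (R : realType) (V : normedModType R) (m : nat).
Variables (nu : 'I_m -> V) (y : 'I_m -> R).
Hypothesis li : lin_indep nu.
Hypothesis y0 : y <> (fun _ => 0).

Let coord (v : 'rV[R]_m) := fun j => v ord0 j.
Let phi (v : 'rV[R]_m) := `|Lstar nu (coord v)|.
Let dv (v : 'rV[R]_m) := dot (coord v) y.

Let phi_cont : continuous phi.
Proof.
move=> x; apply: (@continuous_comp _ _ _ (fun v : 'rV[R]_m => Lstar nu (coord v))).
  exact: cont_lincomb.
exact: norm_continuous.
Qed.

Let dv_cont : continuous dv.
Proof.
have -> : dv = (fun v : 'rV[R]_m => \sum_j v ord0 j *: (y j : R^o)).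
  by apply/funext => v; rewrite /dv /dot; apply: eq_bigr => j _.
exact: cont_lincomb.
Qed.

Let phiZ a v : phi (a *: v) = `|a| * phi v.
Proof.
rewrite /phi /Lstar -normrZ scaler_sumr; congr `|_|; apply: eq_bigr => j _.
by rewrite /coord mxE scalerA.
Qed.

Lemma Dmin : exists c : 'I_m -> R, dot c y = 1 /\
  forall c', dot c' y = 1 -> `|Lstar nu c| <= `|Lstar nu c'|.
Proof.
have [j0 yj0] : exists j0, y j0 != 0.
  apply: contra_notP y0 => h; apply/funext => j.
  by apply/eqP; apply: contra_notT h => hj; exists j.
pose U := [set v : 'rV[R]_m | `|v| = 1].
pose w := (const_mx 1 : 'rV[R]_m).
have w0 : w != 0.
  by apply/negP => /eqP/matrixP/(_ ord0 j0); rewrite !mxE; apply/eqP; rewrite oner_neq0.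
have U0 : U !=set0.
  exists (`|w|^-1 *: w); rewrite /U /= normrZ normfV normr_id mulVf//.
  by rewrite normr_eq0.
have cU : compact U.
  apply: bounded_closed_compact; last exact: closed_level (@norm_continuous _ _).
  by apply: (@bounded_ball _ _ _ 1) => v ->.
have [v1 /set_mem Uv1 v1min] := compact_EVT_min U0 cU (continuous_subspaceT phi_cont).
pose delta := phi v1.
have delta0 : 0 < delta.
  rewrite lt_def normr_ge0 andbT; apply/negP => /eqP/normr0_eq0 L0.
  have cz := li L0.
  have : v1 = 0 by apply/matrixP => i j; rewrite (ord1 i) mxE; exact: cz.
  by move=> v10; move: Uv1; rewrite /U /= v10 normr0 => /eqP; rewrite eq_sym oner_eq0.
have coer v : delta * `|v| <= phi v.
  have [->|vn0] := eqVneq v 0.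
    by rewrite normr0 mulr0 normr_ge0.
  have nv : 0 < `|v| by rewrite normr_gt0.
  have : delta <= phi (`|v|^-1 *: v).
    apply: v1min; apply/mem_set; rewrite /U /= normrZ normfV normr_id mulVf//.
    by rewrite gt_eqF.
  by rewrite phiZ normfV normr_id ler_pdivlMl// mulrC.
pose v0 := (\row_j (if j == j0 then (y j0)^-1 else 0) : 'rV[R]_m).
have dv0 : dv v0 = 1.
  rewrite /dv /dot (bigD1 j0)//= big1 ?addr0.
    by rewrite /coord mxE eqxx mulVf.
  by move=> j /negbTE jj0; rewrite /coord mxE jj0 mul0r.
pose K := phi v0 / delta.
pose A := [set v : 'rV[R]_m | dv v = 1] `&` [set v | `|v| <= K].
have A0 : A !=set0.
  exists v0; split => //=; rewrite /K ler_pdivlMr// mulrC; exact: coer.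
have cA : compact A.
  apply: bounded_closed_compact.
    by apply: (@bounded_ball _ _ _ K) => v [].
  apply: closedI; first exact: closed_level dv_cont.
  exact: closed_sublevel (@norm_continuous _ _).
have [c /set_mem [Ac1 AcK] cmin] := compact_EVT_min A0 cA (continuous_subspaceT phi_cont).
exists (coord c); split; first exact: Ac1.
move=> c' dc'.
pose v := (\row_j c' j : 'rV[R]_m).
have cv : coord v = c' by apply/funext => j; rewrite /coord mxE.
have -> : `|Lstar nu c'| = phi v by rewrite /phi cv.
have [vK|vK] := leP `|v| K.
  by apply: cmin; apply/mem_set; split => //=; rewrite /dv cv.
apply: (le_trans (cmin v0 _)).
  by apply/mem_set; split => //=; rewrite /K ler_pdivlMr// mulrC; exact: coer.
apply: (le_trans _ (coer v)).
have := ltW vK; rewrite -(ler_pM2l delta0) /K mulrC divfK ?gt_eqF//.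
Qed.

End Dmin.

Lemma inf_min (R : realType) (S : set R) a : S a -> (forall s, S s -> a <= s) ->
  inf S = a.
Proof.
move=> Sa amin; apply/eqP; rewrite eq_le; apply/andP; split.
  by apply: ge_inf => //; exists a.
by apply: lb_le_inf => //; exists a.
Qed.

Section Main.
Variables (R : realType) (V : normedModType R) (m : nat).
Variables (nu : 'I_m -> V) (y : 'I_m -> R).

Lemma Lstar_val f c : in_dual f -> (forall j, f (nu j) = y j) ->
  f (Lstar nu c) = dot c y.
Proof.
move=> [lf _] fy; rewrite /Lstar lin_sum//; apply: eq_bigr => j _.
by rewrite fy.
Qed.

Lemma Lstar_pos f c : in_dual f -> (forall j, f (nu j) = y j) -> dot c y = 1 ->
  0 < `|Lstar nu c|.
Proof.
move=> fd fy dc; rewrite normr_gt0; apply/negP => /eqP L0.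
have := Lstar_val c fd fy; rewrite L0 (lin0 fd.1) dc => /eqP.
by rewrite eq_sym oner_eq0.
Qed.

Lemma partb (c : 'I_m -> R) (f : V -> R) :
  dot c y = 1 -> dual_char_set nu y c f -> mni_solution nu y f.
Proof.
move=> dc [[g [[lg cg] gsub] fE] [fd fy]].
have n0 := Lstar_pos fd fy dc.
set x := Lstar nu c in n0 fE *.
split; first by split.
apply/esym/inf_min; first by exists f => //; split.
move=> _ [h [hd hy] <-].
have hx := Lstar_val c hd hy; rewrite dc -/x in hx.
have : 1 <= dual_norm h * `|x|.
  by rewrite -hx (le_trans (ler_norm _))// dn_bound.
rewrite -ler_pdivrMr// mul1r => hle.
apply: (le_trans _ hle); apply: dn_le; first by rewrite invr_ge0 ltW.
move=> z; rewrite fE /= normrM normfV normr_id ler_pM2l ?invr_gt0//.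
have gz u : g u <= `|u|.
  have := gsub (x + u); rewrite addrAC subrr add0r => h1.
  by apply: (le_trans h1); rewrite lerBlDl ler_normD.
rewrite ler_norml gz andbT lerNl -(linN z lg) -normrN; exact: gz.
Qed.

Lemma Lstar_add a (a1 a2 : 'I_m -> R) :
  a *: Lstar nu a1 + Lstar nu a2 = Lstar nu (fun j => a * a1 j + a2 j).
Proof.
rewrite /Lstar scaler_sumr -big_split /=; apply: eq_bigr => j _.
by rewrite scalerA scalerDl.
Qed.

Lemma dot_add a (a1 a2 : 'I_m -> R) :
  a * dot a1 y + dot a2 y = dot (fun j => a * a1 j + a2 j) y.
Proof.
rewrite /dot mulr_sumr -big_split /=; apply: eq_bigr => j _.
by rewrite mulrA mulrDl.
Qed.

Lemma Lstar_delta j : Lstar nu (fun i => (i == j)%:R) = nu j.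
Proof.
rewrite /Lstar (bigD1 j)//= big1 ?addr0 ?eqxx ?scale1r//.
by move=> i /negbTE ->; rewrite scale0r.
Qed.

Lemma dot_delta j : dot (fun i => (i == j)%:R) y = y j.
Proof.
rewrite /dot (bigD1 j)//= big1 ?addr0 ?eqxx ?mul1r//.
by move=> i /negbTE ->; rewrite mul0r.
Qed.

Lemma parta (f : V -> R) : lin_indep nu -> y <> (fun _ => 0) ->
  mni_solution nu y f -> exists c : 'I_m -> R, D_solution nu y c /\ dual_char_set nu y c f.
Proof.
move=> li y0 [[fd fy] fmin].
have [c [dc cmin]] := Dmin li y0.
have d0 := Lstar_pos fd fy dc.
set x := Lstar nu c in d0 cmin *.
set d := `|x| in d0 cmin *.
have fx : f x = 1 by rewrite /x Lstar_val.
pose p (z : V) := d^-1 * `|z|.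
pose G0 := [set q : V * R | exists a, q = (Lstar nu a, dot a y)].
have gG0 : good p G0.
  split.
  - exists (fun _ => 0); congr pair.
      by rewrite /Lstar big1 // => j _; rewrite scale0r.
    by rewrite /dot big1 // => j _; rewrite mul0r.
  - move=> a _ _ _ _ [a1 [-> ->]] [a2 [-> ->]].
    by exists (fun j => a * a1 j + a2 j); rewrite Lstar_add dot_add.
  - move=> _ _ _ [a1 [-> ->]] [a2 [E ->]].
    have e : forall j, a1 j = a2 j.
      move=> j; apply/eqP; rewrite -subr_eq0; apply/eqP; move: j.
      have e0 : \sum_j (a1 j - a2 j) *: nu j = Lstar nu a1 - Lstar nu a2.
        by rewrite /Lstar -sumrB; apply: eq_bigr => j _; rewrite scalerBl.
      by apply: li; rewrite e0 E subrr.
    by rewrite /dot; apply: eq_bigr => j _; rewrite e.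
  - move=> _ _ [a [-> ->]].
    have [t0|t0] := lerP (dot a y) 0.
      by apply: (le_trans t0); rewrite /p mulr_ge0 // invr_ge0 ltW.
    have : d <= `|Lstar nu (fun j => (dot a y)^-1 * a j)|.
      apply: cmin; rewrite /dot; under eq_bigr do rewrite -mulrA; rewrite -mulr_sumr.
      by rewrite mulVf ?gt_eqF.
    have -> : Lstar nu (fun j => (dot a y)^-1 * a j) = (dot a y)^-1 *: Lstar nu a.
      by rewrite /Lstar scaler_sumr; apply: eq_bigr => j _; rewrite scalerA.
    rewrite normrZ normfV gtr0_norm// => h.
    by rewrite /p mulrC ler_pdivlMr// -ler_pdivlMl.
have pD z1 z2 : p (z1 + z2) <= p z1 + p z2.
  by rewrite /p -mulrDr ler_wpM2l ?invr_ge0 ?ler_normD// ltW.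
have pZ a z : 0 < a -> p (a *: z) = a * p z.
  by move=> a0; rewrite /p normrZ gtr0_norm// mulrCA.
have [g [lg gp gG]] := hahn_banach pD pZ gG0.
have gb z : `|g z| <= d^-1 * `|z|.
  rewrite ler_norml gp andbT lerNl -(linN z lg) -normrN; exact: gp.
have gd : in_dual g by split => //; exact: bound_cont gb.
have gy j : g (nu j) = y j.
  by rewrite -Lstar_delta -dot_delta; apply: gG; eexists.
have dng : dual_norm g <= d^-1 by apply: dn_le; [rewrite invr_ge0 ltW|].
have dnf : dual_norm f <= d^-1.
  rewrite fmin; apply: le_trans dng; apply: ge_inf.
    by exists 0 => _ [h [hd _] <-]; exact: dn_ge0.
  by exists g.
have fb z : `|f z| <= d^-1 * `|z|.
  by apply: (le_trans (dn_bound z fd)); rewrite ler_wpM2r.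
exists c; split.
  split => //; apply/esym/inf_min; first by exists c.
  by move=> _ [c' dc' <-]; exact: cmin.
split; last by split.
exists (fun v => d * f v); last first.
  by apply/funext => v; rewrite mulKf ?gt_eqF.
split.
  split.
    by move=> a u z; rewrite (fd.1 a u z) mulrDr mulrCA.
  apply: (@bound_cont _ _ _ (d * dual_norm f)).
    by move=> a u z; rewrite (fd.1 a u z) mulrDr mulrCA.
  move=> z; rewrite normrM gtr0_norm// -mulrA; apply: ler_wpM2l; [exact: ltW|exact: dn_bound].
move=> z; rewrite (linB _ _ fd.1) fx mulrBr mulr1 lerD2r.
apply: (le_trans (ler_norm _)); rewrite normrM gtr0_norm//.
by rewrite -ler_pdivlMl// fb.
Qed.

End Main.

Unset Implicit Arguments.
Local Close Scope classical_set_scope.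

Theorem mainTheorem11 (R : realType) (V : normedModType R) (m : nat)
  (nu : 'I_m -> V) (y : 'I_m -> R) :
  lin_indep nu -> y <> (fun _ => 0) ->
  (forall f : V -> R, mni_solution nu y f ->
     exists c : 'I_m -> R, D_solution nu y c /\ dual_char_set nu y c f) /\
  (forall (c : 'I_m -> R) (f : V -> R), in_dual f -> D_solution nu y c ->
     dual_char_set nu y c f -> mni_solution nu y f).
Proof.
move=> li y0; split.
  by move=> f; apply: parta.
by move=> c f _ [dc _]; apply: partb.
Qed.
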